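(* Let $\mathbf{u}_j\in c_0$, $j\in\mathbb{N}_m$, be linearly independent, let $\mathcal{L}:\ell_1(\mathbb{N})\to\mathbb{R}^m$ be $\mathcal{L}(\mathbf{x}):=[\langle\mathbf{u}_j,\mathbf{x}\rangle:j\in\mathbb{N}_m]$, let $\mathbf{y}\in\mathbb{R}^m$ and $\mathcal{M}_{\mathbf{y}}:=\{\mathbf{x}\in\ell_1(\mathbb{N}):\mathcal{L}(\mathbf{x})=\mathbf{y}\}$. Then $\hat{\mathbf{x}}\in\ell_1(\mathbb{N})$ is a solution of $\inf\{\|\mathbf{x}\|_1:\mathbf{x}\in\mathcal{M}_{\mathbf{y}}\}$ if and only if $\hat{\mathbf{x}}\in\mathcal{M}_{\mathbf{y}}$ and there exist $c_j\in\mathbb{R}$, $j\in\mathbb{N}_m$, such that, with $\mathbf{u}:=\sum_{j\in\mathbb{N}_m}c_j\mathbf{u}_j$, $$\hat{\mathbf{x}}\in\|\mathbf{u}\|_\infty\,\mathrm{co}(\mathcal{V}(\mathbf{u})).$$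
   Context: $\ell_1(\mathbb{N})$ is the space of real sequences with $\|\mathbf{x}\|_1=\sum_j|x_j|<\infty$; $c_0$ is the space of real sequences tending to $0$ with norm $\|\mathbf{u}\|_\infty=\sup_j|u_j|$; $\langle\mathbf{u},\mathbf{x}\rangle:=\sum_{j\in\mathbb{N}}u_jx_j$. $\mathbb{N}_m:=\{1,\dots,m\}$. For $\mathbf{u}\in c_0$, $\mathbb{N}(\mathbf{u}):=\{j\in\mathbb{N}:|u_j|=\|\mathbf{u}\|_\infty\}$, and $\mathcal{V}(\mathbf{u}):=\{\mathrm{sign}(u_j)\mathbf{e}_j:j\in\mathbb{N}(\mathbf{u})\}$, where $\mathbf{e}_j$ is the $j$-th unit sequence. $\mathrm{co}(\mathcal{V})$ denotes the set of all finite convex combinations of elements of $\mathcal{V}$. *)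

(* Defs.v *)
From Stdlib Require Import Reals Lra.
From Coquelicot Require Import Coquelicot.
Open Scope R_scope.

Definition rseq := nat -> R.

Fixpoint fsum (n : nat) (f : nat -> R) : R :=
  match n with O => 0 | S n' => fsum n' f + f n' end.

Definition in_l1 (x : rseq) : Prop := ex_series (fun j => Rabs (x j)).
Definition norm1 (x : rseq) : R := Series (fun j => Rabs (x j)).

Definition in_c0 (u : rseq) : Prop := is_lim_seq u 0.
Definition norm_inf (u : rseq) : R :=
  real (Lub_Rbar (fun r => exists k, r = Rabs (u k))).

Definition pairing (u x : rseq) : R := Series (fun j => u j * x j).

Definition sgn (r : R) : R :=
  if Rlt_dec 0 r then 1 else if Rlt_dec r 0 then -1 else 0.

Definition unit_seq (j : nat) : rseq := fun k => if Nat.eqb k j then 1 else 0.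

Definition Nmax (u : rseq) (j : nat) : Prop := Rabs (u j) = norm_inf u.

Definition Vset (u : rseq) (v : rseq) : Prop :=
  exists j, Nmax u j /\ v = (fun k => sgn (u j) * unit_seq j k).

Definition conv_hull (V : rseq -> Prop) (z : rseq) : Prop :=
  exists (n : nat) (lam : nat -> R) (v : nat -> rseq),
    (forall i, (i < n)%nat -> V (v i)) /\
    (forall i, (i < n)%nat -> 0 <= lam i) /\
    fsum n lam = 1 /\
    z = (fun k => fsum n (fun i => lam i * v i k)).

Definition scale_set (r : R) (A : rseq -> Prop) (z : rseq) : Prop :=
  exists w, A w /\ z = (fun k => r * w k).

Definition lin_indep (m : nat) (u : nat -> rseq) : Prop :=
  forall c : nat -> R,
    (forall k, fsum m (fun j => c j * u j k) = 0) ->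
    forall j, (j < m)%nat -> c j = 0.

Definition Lmap (m : nat) (u : nat -> rseq) (x : rseq) : nat -> R :=
  fun j => pairing (u j) x.
Definition My (m : nat) (u : nat -> rseq) (y : nat -> R) (x : rseq) : Prop :=
  in_l1 x /\ forall j, (j < m)%nat -> Lmap m u x j = y j.

Definition is_min_norm_sol (m : nat) (u : nat -> rseq) (y : nat -> R) (xh : rseq) : Prop :=
  My m u y xh /\ forall x, My m u y x -> norm1 xh <= norm1 x.

(* Main.v *)
Require Import Defs.
From Stdlib Require Import Reals Lra Lia Classical FunctionalExtensionality.
From Coquelicot Require Import Coquelicot.
Open Scope R_scope.


Lemma fsum_ext n f g : (forall i, (i < n)%nat -> f i = g i) -> fsum n f = fsum n g.
Proof. induction n; simpl; intros H; auto. rewrite IHn, H; auto; intros; apply H; lia. Qed.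
Lemma fsum_plus n f g : fsum n (fun i => f i + g i) = fsum n f + fsum n g.
Proof. induction n; simpl; [lra|]. rewrite IHn; lra. Qed.
Lemma fsum_scal n c f : fsum n (fun i => c * f i) = c * fsum n f.
Proof. induction n; simpl; [lra|]. rewrite IHn; lra. Qed.
Lemma fsum_zero n : fsum n (fun _ => 0) = 0.
Proof. induction n; simpl; lra. Qed.
Lemma fsum_sumf n f : fsum (S n) f = sum_f_R0 f n.
Proof. induction n; simpl; [lra|]. simpl in IHn. rewrite <- IHn. lra. Qed.
Lemma fsum_delta N f k : fsum N (fun i => f i * (if Nat.eqb i k then 1 else 0)) = if Nat.ltb k N then f k else 0.
Proof.
  induction N; [reflexivity|]. cbn [fsum]. rewrite IHN.
  destruct (Nat.eqb_spec N k); destruct (Nat.ltb_spec k N); destruct (Nat.ltb_spec k (S N)); try (exfalso; lia); try subst; lra.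
Qed.

Lemma exs_plus (a b : nat -> R) : ex_series a -> ex_series b -> ex_series (fun n => a n + b n).
Proof. intros. exact (ex_series_plus a b H H0). Qed.
Lemma exs_scal (c : R) (a : nat -> R) : ex_series a -> ex_series (fun n => c * a n).
Proof. intros. exact (ex_series_scal_l c a H). Qed.
Lemma exs_le (a b : nat -> R) : (forall n, Rabs (a n) <= b n) -> ex_series b -> ex_series a.
Proof. intros. apply (ex_series_le a b); auto. Qed.
Lemma exs0 : ex_series (fun _ : nat => 0).
Proof. exists 0. apply is_series_Reals. intros e He. exists 0%nat. intros n _.
 rewrite sum_cte. unfold R_dist. rewrite Rmult_0_l, Rminus_0_r, Rabs_R0. exact He. Qed.
Lemma Series0 : Series (fun _ : nat => 0) = 0.
Proof. rewrite (Series_ext _ (fun n => 0 * 0)) by (intros; lra). rewrite Series_scal_l. lra. Qed.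

Lemma series_fin a N : (forall k, (N <= k)%nat -> a k = 0) -> ex_series a /\ Series a = fsum N a.
Proof.
  intros H. destruct N as [|N].
  - assert (E : forall n, a n = 0) by (intros; apply H; lia).
    split. + apply (ex_series_ext (fun _ => 0)); [intros; rewrite E; auto| apply exs0].
    + simpl. rewrite (Series_ext _ (fun _ => 0)) by auto. apply Series0.
  - assert (Ht : forall k, a (S N + k)%nat = 0) by (intros; apply H; lia).
    assert (ex_series a).
    { apply (ex_series_incr_n a (S N)). apply (ex_series_ext (fun _ => 0)); [intros; rewrite Ht; auto| apply exs0]. }
    split; auto. rewrite (Series_incr_n a (S N)) by (auto; lia). simpl Init.Nat.pred.
    rewrite (Series_ext _ (fun _ => 0)) by auto. rewrite Series0, fsum_sumf. lra.
Qed.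

Lemma series_pos_zero a : (forall n, 0 <= a n) -> ex_series a -> Series a = 0 -> forall k, a k = 0.
Proof.
  intros Hp He Hs k. destruct (Hp k) as [Hk|Hk]; auto. exfalso.
  assert (Series (fun n => a k * (if Nat.eqb n k then 1 else 0)) <= Series a).
  { apply Series_le; auto. intros n. destruct (Nat.eqb n k) eqn:E.
    - apply Nat.eqb_eq in E; subst; lra.
    - specialize (Hp n); lra. }
  destruct (series_fin (fun n => a k * (if Nat.eqb n k then 1 else 0)) (S k)) as [_ E].
  { intros j Hj. destruct (Nat.eqb j k) eqn:E; [apply Nat.eqb_eq in E; lia| lra]. }
  rewrite E, (fsum_delta (S k) (fun _ => a k) k) in H.
  assert (Nat.ltb k (S k) = true) by (apply Nat.ltb_lt; lia). rewrite H0 in H. lra.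
Qed.


Lemma exs_ext (a b : nat -> R) : (forall n, a n = b n) -> ex_series a -> ex_series b.
Proof. intros. exact (ex_series_ext a b H H0). Qed.

Lemma fsum_ge_term n f i : (forall j, 0 <= f j) -> (i < n)%nat -> f i <= fsum n f.
Proof.
  intros Hp. induction n; intros Hi; [lia|]. cbn [fsum].
  assert (0 <= fsum n f). { clear -Hp. induction n; cbn [fsum]; [lra|]. specialize (Hp n); lra. }
  destruct (Nat.eq_dec i n); [subst; lra|]. assert (f i <= fsum n f) by (apply IHn; lia). specialize (Hp n); lra.
Qed.

Lemma c0_bounded u : in_c0 u -> exists B, forall k, Rabs (u k) <= B.
Proof.
  intros H. apply is_lim_seq_spec in H. destruct (H (mkposreal 1 Rlt_0_1)) as [N HN].
  exists (1 + fsum N (fun i => Rabs (u i))). intros k.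
  assert (0 <= fsum N (fun i => Rabs (u i))).
  { clear. induction N; cbn [fsum]; [lra|]. pose proof (Rabs_pos (u N)); lra. }
  destruct (Compare_dec.le_lt_dec N k).
  - specialize (HN k l). simpl in HN. rewrite Rminus_0_r in HN. lra.
  - pose proof (fsum_ge_term N (fun i => Rabs (u i)) k (fun j => Rabs_pos _) l). simpl in H1. lra.
Qed.

Lemma pair_ex u x : in_c0 u -> in_l1 x -> ex_series (fun j => u j * x j).
Proof.
  intros Hu Hx. destruct (c0_bounded u Hu) as [B HB].
  apply (exs_le _ (fun j => B * Rabs (x j))); [|apply exs_scal; exact Hx].
  intros n. rewrite Rabs_mult. apply Rmult_le_compat_r; [apply Rabs_pos| apply HB].
Qed.

Lemma l1_plus x x' : in_l1 x -> in_l1 x' -> in_l1 (fun j => x j + x' j).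
Proof.
  intros H1 H2. unfold in_l1. apply (exs_le _ (fun j => Rabs (x j) + Rabs (x' j))); [|apply exs_plus; auto].
  intros n. rewrite Rabs_Rabsolu. apply Rabs_triang.
Qed.

Lemma l1_scal c x : in_l1 x -> in_l1 (fun j => c * x j).
Proof.
  intros H. unfold in_l1. apply (exs_ext (fun j => Rabs c * Rabs (x j))).
  { intros; rewrite Rabs_mult; auto. } apply exs_scal; auto.
Qed.

Lemma norm1_scal c x : norm1 (fun j => c * x j) = Rabs c * norm1 x.
Proof. unfold norm1. rewrite <- Series_scal_l. apply Series_ext. intros; apply Rabs_mult. Qed.

Lemma norm1_nonneg x : in_l1 x -> 0 <= norm1 x.
Proof. intros H. unfold norm1. rewrite <- Series0. apply Series_le; auto. intros; split; [lra| apply Rabs_pos]. Qed.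

Lemma norm1_plus_le x x' : in_l1 x -> in_l1 x' -> norm1 (fun j => x j + x' j) <= norm1 x + norm1 x'.
Proof.
  intros H1 H2. unfold norm1. rewrite <- Series_plus by auto. apply Series_le; [|apply exs_plus; auto].
  intros; split; [apply Rabs_pos| apply Rabs_triang].
Qed.

Lemma pairing_plus u x x' : ex_series (fun j => u j * x j) -> ex_series (fun j => u j * x' j) ->
  pairing u (fun j => x j + x' j) = pairing u x + pairing u x'.
Proof. intros. unfold pairing. rewrite <- Series_plus by auto. apply Series_ext; intros; ring. Qed.

Lemma pairing_scal u c x : pairing u (fun j => c * x j) = c * pairing u x.
Proof. unfold pairing. rewrite <- Series_scal_l. apply Series_ext; intros; ring. Qed.

Lemma pairing_lin m (u : nat -> rseq) c x : (forall j, (j < m)%nat -> ex_series (fun k => u j k * x k)) ->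
  ex_series (fun k => fsum m (fun j => c j * u j k) * x k) /\
  pairing (fun k => fsum m (fun j => c j * u j k)) x = fsum m (fun j => c j * pairing (u j) x).
Proof.
  induction m; intros H.
  - cbn [fsum]. split. + apply (exs_ext (fun _ => 0)); [intros; ring| apply exs0].
    + unfold pairing. rewrite (Series_ext _ (fun _ => 0)) by (intros; ring). apply Series0.
  - destruct IHm as [He Hv]; [intros; apply H; lia|]. cbn [fsum].
    assert (Hm : ex_series (fun k => c m * (u m k * x k))) by (apply exs_scal; apply H; lia).
    split.
    + apply (exs_ext (fun k => fsum m (fun j => c j * u j k) * x k + c m * (u m k * x k))).
      { intros; ring. } apply exs_plus; auto.
    + unfold pairing in *. rewrite (Series_ext _ (fun k => fsum m (fun j => c j * u j k) * x k + c m * (u m k * x k))) by (intros; ring).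
      rewrite Series_plus by auto. rewrite Hv, Series_scal_l. ring.
Qed.

Lemma unit_delta k n : unit_seq k n = if Nat.eqb n k then 1 else 0.
Proof. reflexivity. Qed.

Lemma pairing_unit u k : pairing u (unit_seq k) = u k.
Proof.
  unfold pairing, unit_seq. destruct (series_fin (fun n => u n * (if Nat.eqb n k then 1 else 0)) (S k)) as [_ E].
  { intros j Hj. destruct (Nat.eqb_spec j k); [lia| ring]. }
  rewrite E, fsum_delta. destruct (Nat.ltb_spec k (S k)); [auto| lia].
Qed.

Lemma unit_abs k : (fun j => Rabs (unit_seq k j)) = (fun j => 1 * (if Nat.eqb j k then 1 else 0)).
Proof. apply functional_extensionality. intros j. unfold unit_seq. destruct (Nat.eqb j k); [rewrite Rabs_R1| rewrite Rabs_R0]; ring. Qed.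

Lemma l1_unit k : in_l1 (unit_seq k).
Proof. unfold in_l1. rewrite unit_abs. apply (series_fin _ (S k)). intros j Hj. destruct (Nat.eqb_spec j k); [lia| ring]. Qed.

Lemma norm1_unit k : norm1 (unit_seq k) = 1.
Proof. unfold norm1. rewrite unit_abs. destruct (series_fin (fun j => 1 * (if Nat.eqb j k then 1 else 0)) (S k)) as [_ E].
  { intros j Hj. destruct (Nat.eqb_spec j k); [lia| ring]. }
  rewrite E, fsum_delta. destruct (Nat.ltb_spec k (S k)); [auto| lia]. Qed.

Lemma l1_zero : in_l1 (fun _ => 0).
Proof. unfold in_l1. apply (exs_ext (fun _ => 0)); [intros; rewrite Rabs_R0; auto| apply exs0]. Qed.
Lemma norm1_zero : norm1 (fun _ => 0) = 0.
Proof. unfold norm1. rewrite (Series_ext _ (fun _ => 0)) by (intros; apply Rabs_R0). apply Series0. Qed.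
Lemma pairing_zero u : pairing u (fun _ => 0) = 0.
Proof. unfold pairing. rewrite (Series_ext _ (fun _ => 0)) by (intros; ring). apply Series0. Qed.


Definition comb (k : nat) (y : nat -> R) (t : R) (s : nat -> R) (i : nat) : R :=
  t * y i + (if Nat.ltb i k then s i else 0).
Definition Fval (k : nat) (b : R) (d : nat -> R) (t : R) (s : nat -> R) : R :=
  t * b + fsum k (fun j => s j * d j).
Definition Dom m (u : nat -> rseq) y k b d : Prop :=
  forall t s x, in_l1 x -> (forall i, (i < m)%nat -> pairing (u i) x = comb k y t s i) ->
  Fval k b d t s <= norm1 x.
Definition Sset m (u : nat -> rseq) y k t s x (sg : R) : Prop :=
  in_l1 x /\ forall i, (i < m)%nat -> pairing (u i) x = comb k y t s i + (if Nat.eqb i k then sg else 0).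

Lemma Sscale m u y k t s x sg c sg' : sg' = c * sg -> Sset m u y k t s x sg ->
  Sset m u y k (c * t) (fun j => c * s j) (fun j => c * x j) sg'.
Proof.
  intros -> [H1 H2]. split; [apply l1_scal; auto|]. intros i Hi.
  rewrite pairing_scal, H2 by auto. unfold comb. destruct (Nat.ltb i k); destruct (Nat.eqb i k); ring.
Qed.

Lemma Fval_scal k b d c t s : Fval k b d (c * t) (fun j => c * s j) = c * Fval k b d t s.
Proof. unfold Fval. rewrite (fsum_ext k _ (fun j => c * (s j * d j))) by (intros; ring). rewrite fsum_scal. ring. Qed.

Lemma Fval_plus k b d t s t' s' : Fval k b d (t + t') (fun j => s j + s' j) = Fval k b d t s + Fval k b d t' s'.
Proof. unfold Fval. rewrite (fsum_ext k _ (fun j => s j * d j + s' j * d j)) by (intros; ring). rewrite fsum_plus. ring. Qed.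

Lemma key m u y k b d t s x t' s' x' :
  (forall j, (j < m)%nat -> in_c0 (u j)) -> Dom m u y k b d ->
  Sset m u y k t s x (-1) -> Sset m u y k t' s' x' 1 ->
  Fval k b d t s - norm1 x <= norm1 x' - Fval k b d t' s'.
Proof.
  intros hu HD [H1 H2] [H1' H2'].
  assert (Fval k b d (t + t') (fun j => s j + s' j) <= norm1 (fun j => x j + x' j)).
  { apply HD; [apply l1_plus; auto|]. intros i Hi. rewrite pairing_plus by (apply pair_ex; auto).
    rewrite H2, H2' by auto. unfold comb. destruct (Nat.ltb i k); destruct (Nat.eqb i k); ring. }
  rewrite Fval_plus in H. pose proof (norm1_plus_le x x' H1 H1'). lra.
Qed.

Lemma step m u y k b d : (forall j, (j < m)%nat -> in_c0 (u j)) -> Dom m u y k b d ->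
  exists dk, forall sg, (sg = 1 \/ sg = -1) -> forall t s x, Sset m u y k t s x sg ->
    Fval k b d t s + sg * dk <= norm1 x.
Proof.
  intros hu HD.
  destruct (classic (exists t s x, Sset m u y k t s x (-1))) as [[t0 [s0 [x0 H0]]]|Hno].
  - set (E := fun v => exists t s x, Sset m u y k t s x (-1) /\ v = Fval k b d t s - norm1 x).
    assert (Hp : Sset m u y k (-1 * t0) (fun j => -1 * s0 j) (fun j => -1 * x0 j) 1)
      by (apply (Sscale _ _ _ _ _ _ _ (-1)); [ring| auto]).
    assert (Hb : bound E).
    { exists (norm1 (fun j => -1 * x0 j) - Fval k b d (-1 * t0) (fun j => -1 * s0 j)).
      intros v [t [s [x [Hs ->]]]]. apply (key m u y k b d); auto. }
    destruct (completeness E Hb) as [l [Hl1 Hl2]].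
    { exists (Fval k b d t0 s0 - norm1 x0). exists t0, s0, x0. auto. }
    exists l. intros sg [->| ->] t s x Hs.
    + assert (l <= norm1 x - Fval k b d t s).
      { apply Hl2. intros v [t1 [s1 [x1 [Hs1 ->]]]]. apply (key m u y k b d); auto. }
      lra.
    + assert (Fval k b d t s - norm1 x <= l) by (apply Hl1; exists t, s, x; auto). lra.
  - exists 0. intros sg [->| ->] t s x Hs.
    + exfalso. apply Hno. exists (-1 * t), (fun j => -1 * s j), (fun j => -1 * x j).
      apply (Sscale m u y k t s x 1 (-1) (-1)); [ring| auto].
    + exfalso. apply Hno. eauto.
Qed.

Lemma step2 m u y k b d : (forall j, (j < m)%nat -> in_c0 (u j)) -> Dom m u y k b d ->
  exists dk, Dom m u y (S k) b (fun j => if Nat.eqb j k then dk else d j).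
Proof.
  intros hu HD. destruct (step m u y k b d hu HD) as [dk Hdk]. exists dk.
  intros t s x Hx Hp.
  assert (Hc : forall i, comb (S k) y t s i = comb k y t s i + (if Nat.eqb i k then s k else 0)).
  { intros i. unfold comb. destruct (Nat.eqb_spec i k); destruct (Nat.ltb_spec i k); destruct (Nat.ltb_spec i (S k));
    try (exfalso; lia); try subst; ring. }
  assert (HF : Fval (S k) b (fun j => if Nat.eqb j k then dk else d j) t s = Fval k b d t s + s k * dk).
  { unfold Fval. cbn [fsum]. rewrite Nat.eqb_refl.
    rewrite (fsum_ext k (fun j => s j * (if Nat.eqb j k then dk else d j)) (fun j => s j * d j)).
    - ring.
    - intros j Hj. destruct (Nat.eqb_spec j k); [lia| auto]. }
  rewrite HF.
  destruct (Rtotal_order (s k) 0) as [Hn|[Hz|Hpos]].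
  - set (c := -1 / s k). assert (Hc0 : 0 < c) by (unfold c; apply Rdiv_neg_neg; lra).
    assert (HS : Sset m u y k (c * t) (fun j => c * s j) (fun j => c * x j) (-1)).
    { apply (Sscale _ _ _ _ _ _ _ (s k) c); [unfold c; field; lra|]. split; auto.
      intros i Hi. rewrite Hp, Hc by auto. reflexivity. }
    pose proof (Hdk (-1) (or_intror eq_refl) _ _ _ HS). rewrite Fval_scal, norm1_scal, Rabs_pos_eq in H by lra.
    assert (c * (Fval k b d t s + s k * dk) <= c * norm1 x).
    { replace (c * (Fval k b d t s + s k * dk)) with (c * Fval k b d t s + -1 * dk) by (unfold c; field; lra). lra. }
    apply Rmult_le_reg_l in H0; auto.
  - rewrite Hz, Rmult_0_l, Rplus_0_r. apply HD; auto. intros i Hi. rewrite Hp, Hc, Hz by auto.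
    destruct (Nat.eqb i k); ring.
  - set (c := 1 / s k). assert (Hc0 : 0 < c) by (unfold c; apply Rdiv_pos_pos; lra).
    assert (HS : Sset m u y k (c * t) (fun j => c * s j) (fun j => c * x j) 1).
    { apply (Sscale _ _ _ _ _ _ _ (s k) c); [unfold c; field; lra|]. split; auto.
      intros i Hi. rewrite Hp, Hc by auto. reflexivity. }
    pose proof (Hdk 1 (or_introl eq_refl) _ _ _ HS). rewrite Fval_scal, norm1_scal, Rabs_pos_eq in H by lra.
    assert (c * (Fval k b d t s + s k * dk) <= c * norm1 x).
    { replace (c * (Fval k b d t s + s k * dk)) with (c * Fval k b d t s + 1 * dk) by (unfold c; field; lra). lra. }
    apply Rmult_le_reg_l in H0; auto.
Qed.

Lemma base m u y xh d : is_min_norm_sol m u y xh -> Dom m u y 0 (norm1 xh) d.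
Proof.
  intros [[Hx1 Hx2] Hmin] t s x Hx Hp. unfold Fval. cbn [fsum].
  pose proof (norm1_nonneg xh Hx1). pose proof (norm1_nonneg x Hx).
  destruct (Rle_or_lt t 0) as [Ht|Ht]; [nra|].
  assert (My m u y (fun j => (1/t) * x j)).
  { split; [apply l1_scal; auto|]. intros i Hi. unfold Lmap. rewrite pairing_scal, Hp by auto.
    unfold comb. destruct (Nat.ltb_spec i 0); [lia|]. field. lra. }
  apply Hmin in H1. rewrite norm1_scal, Rabs_pos_eq in H1 by (apply Rlt_le, Rdiv_lt_0_compat; lra).
  apply (Rmult_le_compat_l t) in H1; [|lra]. replace (t * (1 / t * norm1 x)) with (norm1 x) in H1 by (field; lra). lra.
Qed.

Lemma Dom_all m u y xh : (forall j, (j < m)%nat -> in_c0 (u j)) -> is_min_norm_sol m u y xh ->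
  forall k, exists d, Dom m u y k (norm1 xh) d.
Proof.
  intros hu H k. induction k.
  - exists (fun _ => 0). apply base; auto.
  - destruct IHk as [d Hd]. destruct (step2 m u y k _ d hu Hd) as [dk Hk]. eauto.
Qed.


Lemma series_le_gen a b : (forall n, a n <= b n) -> ex_series a -> ex_series b -> Series a <= Series b.
Proof.
  intros H Ha Hb. assert (0 <= Series (fun n => b n - a n)).
  { rewrite <- Series0. apply Series_le; [intros n; specialize (H n); lra|]. apply (exs_ext (fun n => b n + (-1) * a n)); [intros; ring|].
    apply exs_plus; auto. apply exs_scal; auto. }
  rewrite Series_minus in H0 by auto. lra.
Qed.

Lemma norm_inf_eq f M k0 : (forall k, Rabs (f k) <= M) -> Rabs (f k0) = M -> norm_inf f = M.
Proof.
  intros H1 H2. unfold norm_inf. rewrite (is_lub_Rbar_unique _ (Finite M)); [reflexivity|]. split.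
  - intros r [k ->]. simpl. apply H1.
  - intros b Hb. rewrite <- H2. apply Hb. exists k0; auto.
Qed.

Lemma norm_inf_info f : norm_inf f <> 0 -> 0 < norm_inf f /\ forall k, Rabs (f k) <= norm_inf f.
Proof.
  unfold norm_inf. pose proof (Lub_Rbar_correct (fun r => exists k, r = Rabs (f k))) as [Hu _].
  destruct (Lub_Rbar (fun r => exists k, r = Rabs (f k))) as [l| |]; simpl; intros Hne; try (exfalso; lra).
  assert (Hk : forall k, Rabs (f k) <= l). { intros k. assert (Rbar_le (Rabs (f k)) l) by (apply Hu; eauto). exact H. }
  split; auto. pose proof (Hk 0%nat). pose proof (Rabs_pos (f 0%nat)). lra.
Qed.

Lemma c0_comb m (u : nat -> rseq) c : (forall j, (j < m)%nat -> in_c0 (u j)) -> in_c0 (fun k => fsum m (fun j => c j * u j k)).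
Proof.
  induction m; intros hu; unfold in_c0.
  - cbn [fsum]. apply is_lim_seq_const.
  - cbn [fsum]. replace (Finite 0) with (Finite (0 + c m * 0)) by (f_equal; ring).
    apply is_lim_seq_plus'. + apply IHm. intros; apply hu; lia.
    + apply (is_lim_seq_scal_l (u m) (c m) 0). apply hu; lia.
Qed.

Lemma sgn_cases r : (sgn r = 1 /\ 0 < r) \/ (sgn r = -1 /\ r < 0) \/ (sgn r = 0 /\ r = 0).
Proof. unfold sgn. destruct (Rlt_dec 0 r); [left; auto|]. destruct (Rlt_dec r 0); [right; left; auto| right; right; split; auto; lra]. Qed.

Lemma Q_plus M uk a b : 0 < M -> Rabs uk <= M -> uk * a = M * Rabs a -> uk * b = M * Rabs b ->
  uk * (a + b) = M * Rabs (a + b).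
Proof.
  intros HM Hu Ha Hb.
  assert (uk * (a + b) <= M * Rabs (a + b)).
  { apply (Rle_trans _ (Rabs (uk * (a + b)))); [apply Rle_abs|]. rewrite Rabs_mult.
    apply Rmult_le_compat_r; [apply Rabs_pos| auto]. }
  pose proof (Rabs_triang a b). assert (M * Rabs (a + b) <= M * (Rabs a + Rabs b)) by (apply Rmult_le_compat_l; lra).
  lra.
Qed.


Lemma easy_dir (m : nat) (u : nat -> rseq) (y : nat -> R) (xh : rseq)
  (hu : forall j, (j < m)%nat -> in_c0 (u j)) (c : nat -> R) :
  My m u y xh ->
  scale_set (norm_inf (fun k => fsum m (fun j => c j * u j k)))
     (conv_hull (Vset (fun k => fsum m (fun j => c j * u j k)))) xh ->
  forall x, My m u y x -> norm1 xh <= norm1 x.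
Proof.
  set (uc := fun k => fsum m (fun j => c j * u j k)).
  intros [Hx1 Hx2] [w [[n [lam [vv [HV [Hl [Hs Hw]]]]]] Hxh]] x [Hy1 Hy2].
  set (M := norm_inf uc) in *.
  destruct (Req_dec M 0) as [HM0|HM0].
  - rewrite Hxh, HM0, norm1_scal, Rabs_R0, Rmult_0_l. apply norm1_nonneg; auto.
  - destruct (norm_inf_info uc HM0) as [HM Hb]. fold M in HM, Hb.
    assert (Hterm : forall k, uc k * w k = M * Rabs (w k)).
    { intros k. rewrite Hw. clear Hs Hw. induction n.
      - cbn [fsum]. rewrite Rabs_R0. ring.
      - cbn [fsum]. apply Q_plus; [exact HM| apply Hb| apply IHn; intros; [apply HV| apply Hl]; lia|].
        destruct (HV n ltac:(lia)) as [j [Hj ->]]. unfold unit_seq. destruct (Nat.eqb_spec k j).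
        + subst j. unfold Nmax in Hj. fold uc in Hj. fold M in Hj.
          assert (uc k <> 0) by (intro E; rewrite E, Rabs_R0 in Hj; lra).
          pose proof (Hl n ltac:(lia)).
          destruct (sgn_cases (uc k)) as [[E1 E2]|[[E1 E2]|[E1 E2]]]; [| |lra]; rewrite E1.
          * assert (uc k = M) by (rewrite <- Hj, Rabs_pos_eq; lra).
            rewrite H1, Rabs_pos_eq by nra. ring.
          * assert (uc k = - M) by (rewrite <- Hj, Rabs_left; lra).
            replace (lam n * (-1 * 1)) with (- lam n) by ring. rewrite Rabs_Ropp, Rabs_pos_eq by lra. rewrite H1; ring.
        + rewrite !Rmult_0_r, Rabs_R0. ring. }
    assert (Hxx : forall k, uc k * xh k = M * Rabs (xh k)).
    { intros k. rewrite Hxh. rewrite Rabs_mult, (Rabs_pos_eq M) by lra.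
      replace (uc k * (M * w k)) with (M * (uc k * w k)) by ring. rewrite Hterm. ring. }
    assert (Hex : forall z, in_l1 z -> (forall j, (j < m)%nat -> ex_series (fun k => u j k * z k))) by
      (intros; apply pair_ex; auto).
    destruct (pairing_lin m u c xh (Hex xh Hx1)) as [Ex1 Pv1].
    destruct (pairing_lin m u c x (Hex x Hy1)) as [Ex2 Pv2].
    fold uc in Ex1, Pv1, Ex2, Pv2.
    assert (Heq : pairing uc xh = pairing uc x).
    { rewrite Pv1, Pv2. apply fsum_ext. intros j Hj. f_equal. unfold Lmap in *. rewrite Hx2, Hy2; auto. }
    assert (H1 : pairing uc xh = M * norm1 xh).
    { unfold pairing, norm1. rewrite <- Series_scal_l. apply Series_ext. apply Hxx. }
    assert (H2 : pairing uc x <= M * norm1 x).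
    { unfold pairing, norm1. rewrite <- Series_scal_l. apply series_le_gen; auto; [|apply exs_scal; auto].
      intros k. apply (Rle_trans _ (Rabs (uc k * x k))); [apply Rle_abs|]. rewrite Rabs_mult.
      apply Rmult_le_compat_r; [apply Rabs_pos| auto]. }
    assert (M * norm1 xh <= M * norm1 x) by lra. apply Rmult_le_reg_l in H; auto.
Qed.


Lemma Rabs_m1 : Rabs (-1) = 1.
Proof. rewrite Rabs_left; lra. Qed.

Lemma hard_dir (m : nat) (u : nat -> rseq) (y : nat -> R) (xh : rseq)
  (hu : forall j, (j < m)%nat -> in_c0 (u j)) :
  is_min_norm_sol m u y xh ->
  exists c : nat -> R,
  scale_set (norm_inf (fun k => fsum m (fun j => c j * u j k)))
     (conv_hull (Vset (fun k => fsum m (fun j => c j * u j k)))) xh.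
Proof.
  intros Hmin. pose proof Hmin as [[Hx1 Hx2] Hm].
  set (b := norm1 xh). assert (Hb0 : 0 <= b) by (apply norm1_nonneg; auto).
  destruct (Rle_lt_or_eq_dec 0 b Hb0) as [Hbp|Hbz].
  2:{ assert (Hz : forall k, xh k = 0).
      { intros k. apply Rabs_eq_0. apply (series_pos_zero (fun k => Rabs (xh k))); auto. intros; apply Rabs_pos. }
      exists (fun _ => 0).
      set (uc := fun k => fsum m (fun j => 0 * u j k)).
      assert (Huc : forall k, uc k = 0) by (intros k; unfold uc; rewrite (fsum_ext m _ (fun _ => 0)) by (intros; ring); apply fsum_zero).
      assert (HN : norm_inf uc = 0) by (apply (norm_inf_eq _ _ 0%nat); intros; rewrite Huc, Rabs_R0; lra).
      rewrite HN.
      exists (fun k => fsum 1 (fun i => 1 * (fun k => sgn (uc 0%nat) * unit_seq 0 k) k)). split.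
      - exists 1%nat, (fun _ => 1), (fun _ => fun k => sgn (uc 0%nat) * unit_seq 0 k). repeat split.
        + intros. exists 0%nat. split; auto. unfold Nmax. rewrite HN, Huc, Rabs_R0; auto.
        + intros; lra.
        + cbn [fsum]. ring.
      - apply functional_extensionality. intros k. rewrite Hz. ring. }
  destruct (Dom_all m u y xh hu Hmin m) as [d HD]. fold b in HD.
  assert (Ha : forall x, in_l1 x -> fsum m (fun j => pairing (u j) x * d j) <= norm1 x).
  { intros x Hx. specialize (HD 0 (fun j => pairing (u j) x) x Hx). unfold Fval in HD.
    rewrite Rmult_0_l, Rplus_0_l in HD. apply HD. intros i Hi. unfold comb.
    destruct (Nat.ltb_spec i m); [ring| lia]. }
  assert (Hyd : fsum m (fun j => y j * d j) = b).
  { pose proof (HD 1 (fun j => - y j) (fun _ => 0) l1_zero) as H1.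
    pose proof (HD (-1) (fun j => y j) (fun _ => 0) l1_zero) as H2.
    unfold Fval in H1, H2. rewrite norm1_zero in H1, H2.
    rewrite (fsum_ext m _ (fun j => -1 * (y j * d j))) in H1 by (intros; ring). rewrite fsum_scal in H1.
    assert (b - fsum m (fun j => y j * d j) <= 0).
    { replace (b - fsum m (fun j => y j * d j)) with (1 * b + -1 * fsum m (fun j => y j * d j)) by ring.
      apply H1. intros i Hi. rewrite pairing_zero. unfold comb. destruct (Nat.ltb_spec i m); [ring| lia]. }
    assert (-1 * b + fsum m (fun j => y j * d j) <= 0).
    { apply H2. intros i Hi. rewrite pairing_zero. unfold comb. destruct (Nat.ltb_spec i m); [ring| lia]. }
    lra. }
  set (v := fun k => fsum m (fun j => d j * u j k)).
  assert (Hpv : forall x, in_l1 x -> ex_series (fun k => v k * x k) /\ pairing v x = fsum m (fun j => d j * pairing (u j) x)).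
  { intros x Hx. apply pairing_lin. intros; apply pair_ex; auto. }
  assert (HA : forall x, in_l1 x -> pairing v x <= norm1 x).
  { intros x Hx. destruct (Hpv x Hx) as [_ ->]. rewrite (fsum_ext m _ (fun j => pairing (u j) x * d j)) by (intros; ring).
    auto. }
  assert (Hv1 : forall k, Rabs (v k) <= 1).
  { intros k. pose proof (HA _ (l1_unit k)) as H1. rewrite pairing_unit, norm1_unit in H1.
    pose proof (HA _ (l1_scal (-1) _ (l1_unit k))) as H2. rewrite pairing_scal, pairing_unit, norm1_scal, norm1_unit in H2.
    rewrite Rabs_m1 in H2. apply Rabs_le. lra. }
  assert (Hvx : pairing v xh = b).
  { destruct (Hpv xh Hx1) as [_ ->]. rewrite <- Hyd. apply fsum_ext. intros j Hj. unfold Lmap in Hx2. rewrite Hx2; auto. ring. }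
  assert (Hvex : ex_series (fun k => v k * xh k)) by (apply Hpv; auto).
  assert (Hprod : forall k, v k * xh k = Rabs (xh k)).
  { assert (Hg : forall k, 0 <= Rabs (xh k) - v k * xh k).
    { intros k. assert (v k * xh k <= Rabs (xh k)); [|lra].
      apply (Rle_trans _ (Rabs (v k * xh k))); [apply Rle_abs|]. rewrite Rabs_mult.
      pose proof (Rabs_pos (xh k)). specialize (Hv1 k). nra. }
    intros k. pose proof (series_pos_zero (fun k => Rabs (xh k) - v k * xh k) Hg) as H.
    assert (Rabs (xh k) - v k * xh k = 0); [|lra]. apply H.
    - apply (exs_ext (fun k => Rabs (xh k) + -1 * (v k * xh k))); [intros; ring|]. apply exs_plus; auto. apply exs_scal; auto.
    - rewrite Series_minus by auto. unfold pairing in Hvx. unfold norm1 in b. fold b. lra. }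
  assert (Hsign : forall k, xh k <> 0 -> (v k = 1 /\ 0 < xh k) \/ (v k = -1 /\ xh k < 0)).
  { intros k Hk. specialize (Hprod k). destruct (Rlt_or_le 0 (xh k)).
    - left. rewrite Rabs_pos_eq in Hprod by lra. split; auto.
      apply (Rmult_eq_reg_r (xh k)); lra.
    - right. rewrite Rabs_left in Hprod by lra. split; [|lra].
      apply (Rmult_eq_reg_r (xh k)); lra. }
  assert (Hk0 : exists k0, xh k0 <> 0).
  { apply NNPP. intros Hn. assert (b = 0); [|lra]. unfold b, norm1.
    rewrite (Series_ext _ (fun _ => 0)); [apply Series0|]. intros k.
    assert (xh k = 0) by (apply NNPP; intro; apply Hn; eauto). rewrite H; apply Rabs_R0. }
  destruct Hk0 as [k0 Hk0].
  assert (Hc0 : in_c0 v) by (apply c0_comb; auto).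
  destruct (proj2 (is_lim_seq_spec v 0) Hc0 (mkposreal (1/2) ltac:(lra))) as [N HN].
  assert (Hsupp : forall k, (N <= k)%nat -> xh k = 0).
  { intros k Hk. apply NNPP. intros Hne. specialize (HN k Hk). simpl in HN. rewrite Rminus_0_r in HN.
    destruct (Hsign k Hne) as [[E _]|[E _]]; rewrite E in HN; [rewrite Rabs_R1 in HN| rewrite Rabs_m1 in HN]; lra. }
  exists (fun j => b * d j).
  set (uc := fun k => fsum m (fun j => b * d j * u j k)).
  assert (Huc : forall k, uc k = b * v k).
  { intros k. unfold uc, v. rewrite <- fsum_scal. apply fsum_ext. intros; ring. }
  assert (HN0 : norm_inf uc = b).
  { apply (norm_inf_eq _ _ k0).
    - intros k. rewrite Huc, Rabs_mult, Rabs_pos_eq by lra. specialize (Hv1 k). nra.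
    - rewrite Huc, Rabs_mult, Rabs_pos_eq by lra. destruct (Hsign k0 Hk0) as [[E _]|[E _]]; rewrite E;
      [rewrite Rabs_R1| rewrite Rabs_m1]; ring. }
  assert (Hsg : forall k, xh k <> 0 -> Rabs (xh k) * sgn (uc k) = xh k /\ Rabs (uc k) = b).
  { intros k Hk. rewrite Huc. destruct (Hsign k Hk) as [[E1 E2]|[E1 E2]]; rewrite E1.
    - rewrite Rmult_1_r, (Rabs_pos_eq (xh k)), (Rabs_pos_eq b) by lra. unfold sgn. destruct (Rlt_dec 0 b); [|lra]. split; ring.
    - rewrite Rabs_left by lra. unfold sgn. destruct (Rlt_dec 0 (b * -1)); [lra|].
      destruct (Rlt_dec (b * -1) 0); [|lra]. split; [ring|]. rewrite Rabs_left by lra. ring. }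
  rewrite HN0.
  set (n := S N).
  set (lam := fun i => Rabs (xh i) / b).
  set (vk0 := fun k => sgn (uc k0) * unit_seq k0 k).
  set (vv := fun i => if Req_EM_T (xh i) 0 then vk0 else (fun k => sgn (uc i) * unit_seq i k)).
  exists (fun k => fsum n (fun i => lam i * vv i k)). split.
  - exists n, lam, vv. repeat split.
    + intros i Hi. unfold vv. destruct (Req_EM_T (xh i) 0).
      * exists k0. split; auto. unfold Nmax. rewrite HN0. apply Hsg; auto.
      * exists i. split; auto. unfold Nmax. rewrite HN0. apply Hsg; auto.
    + intros i Hi. unfold lam. apply Rdiv_le_0_compat; [apply Rabs_pos| lra].
    + unfold lam. rewrite (fsum_ext n _ (fun i => (1 / b) * Rabs (xh i))) by (intros; unfold Rdiv; ring).
      rewrite fsum_scal. destruct (series_fin (fun i => Rabs (xh i)) n) as [_ E].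
      { intros k Hk. rewrite Hsupp by (unfold n in Hk; lia). apply Rabs_R0. }
      rewrite <- E. fold (norm1 xh). fold b. field. lra.
  - apply functional_extensionality. intros k.
    rewrite (fsum_ext n _ (fun i => (xh i / b) * (if Nat.eqb i k then 1 else 0))).
    + rewrite fsum_delta. destruct (Nat.ltb_spec k n).
      * field. lra.
      * rewrite Hsupp by (unfold n in *; lia). ring.
    + intros i Hi. unfold vv, lam. destruct (Req_EM_T (xh i) 0) as [E|E].
      * rewrite E, Rabs_R0. unfold Rdiv. ring.
      * unfold unit_seq. rewrite Nat.eqb_sym. destruct (Hsg i E) as [H1 _].
        rewrite <- H1 at 2. unfold Rdiv. ring.
Qed.


Theorem mainTheorem8 (m : nat) (u : nat -> rseq) (y : nat -> R) (xh : rseq)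
  (hu : forall j, (j < m)%nat -> in_c0 (u j))
  (hind : lin_indep m u)
  (hxh : in_l1 xh) :
  is_min_norm_sol m u y xh <->
  (My m u y xh /\
   exists c : nat -> R,
     let uc : rseq := fun k => fsum m (fun j => c j * u j k) in
     scale_set (norm_inf uc) (conv_hull (Vset uc)) xh).
Proof.
  split.
  - intros H. split; [apply H|]. destruct (hard_dir m u y xh hu H) as [c Hc]. exists c. exact Hc.
  - intros [HMy [c Hc]]. split; auto. exact (easy_dir m u y xh hu c HMy Hc).
Qed.
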